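(* Let $G$ be a complex reflection group acting on $V\cong\mathbb{C}^2$. The codimension atoms of $G$ are exactly the reflections in $G$ together with the elements $g\in G$ such that $\ell(g)>\operatorname{codim}(g)$.
   Context: A reflection is an element of $GL(V)$ of finite order fixing a hyperplane pointwise; a complex reflection group is a finite subgroup of $GL(V)$ generated by reflections. $\ell(g)$ is the minimal number of reflections in $G$ whose product is $g$ ($\ell(1)=0$), and $\operatorname{codim}(g)=2-\dim\{v\in V:gv=v\}$. The codimension order is $a\le_\perp c$ iff $\operatorname{codim}(a)+\operatorname{codim}(a^{-1}c)=\operatorname{codim}(c)$, and a codimension atom is an element covering the identity in this poset. *)

(* Defs.v *)
From mathcomp Require Import all_boot all_order all_algebra all_field.
From mathcomp Require Import boolp.
Set Implicit Arguments. Unset Strict Implicit. Unset Printing Implicit Defensive.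
Import GRing.Theory Num.Theory.
Local Open Scope ring_scope.

(* V = C^2 is modelled by row vectors 'rV[algC]_2; elements of GL(V) are
   2x2 invertible matrices acting on the right (v |-> v *m g). *)
Notation mx2 := 'M[algC]_2.

Definition dimfix (g : mx2) : nat := \rank (kermx (g - 1%:M)).

Definition codim (g : mx2) : nat := (2 - dimfix g)%N.

Definition is_reflection (g : mx2) : Prop :=
  (exists n : nat, (0 < n)%N /\ g ^+ n = 1%:M) /\ dimfix g = 1%N.

Definition prodmx (s : seq mx2) : mx2 := foldr (fun a b => a *m b) 1%:M s.

Definition refl_word (G : seq mx2) (g : mx2) (s : seq mx2) : Prop :=
  (forall r, r \in s -> r \in G /\ is_reflection r) /\ prodmx s = g.

Definition cplx_refl_group (G : seq mx2) : Prop :=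
  [/\ 1%:M \in G,
      (forall g h, g \in G -> h \in G -> g *m h \in G),
      (forall g, g \in G -> g \in unitmx) &
      (forall g, g \in G -> exists s, refl_word G g s)].

Definition has_refl_word_of_size (G : seq mx2) (g : mx2) (n : nat) : bool :=
  `[< exists s, refl_word G g s /\ size s = n >].

(* reflection length: the minimal number of reflections of G whose product is g
   (ell 1 = 0 via the empty word); defaults to 0 if g is no such product *)
Definition ell (G : seq mx2) (g : mx2) : nat :=
  match pselect (exists n, has_refl_word_of_size G g n) with
  | left h => ex_minn h
  | right _ => 0%N
  end.

Definition codim_le (a c : mx2) : Prop :=
  (codim a + codim (invmx a *m c))%N = codim c.

Definition codim_atom (G : seq mx2) (a : mx2) : Prop :=
  [/\ a \in G, a <> 1%:M, codim_le 1%:M a &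
      forall b, b \in G -> codim_le 1%:M b -> codim_le b a -> b = 1%:M \/ b = a].

(* Main.v *)
Require Import Defs.
From mathcomp Require Import all_boot all_order all_algebra all_field.
From mathcomp Require Import boolp.
Local Open Scope ring_scope.
Import GRing.Theory.
Set Implicit Arguments.

Lemma codimE (g : mx2) : codim g = \rank (g - 1%:M).
Proof.
rewrite /codim /dimfix mxrank_ker.
have := rank_leq_row (g - 1%:M); move: (\rank _) => r Hr.
by rewrite subKn.
Qed.

Lemma codim0 (g : mx2) : codim g = 0%N -> g = 1%:M.
Proof.
rewrite codimE => /eqP; rewrite mxrank_eq0 subr_eq0 => /eqP //.
Qed.

Lemma codim1 : codim (1%:M : mx2) = 0%N.
Proof. by rewrite codimE subrr mxrank0. Qed.

Lemma codim_le2 (g : mx2) : (codim g <= 2)%N.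
Proof. by rewrite /codim leq_subr. Qed.

Lemma refl_codim (g : mx2) : is_reflection g -> codim g = 1%N.
Proof. by case=> _; rewrite /codim => ->. Qed.

Lemma exp_in (G : seq mx2) (g : mx2) k : cplx_refl_group G -> g \in G -> g ^+ k \in G.
Proof.
case=> H1 HM _ _ Hg; elim: k => [|k IH]; first by rewrite expr0.
by rewrite exprS; apply: HM.
Qed.

Lemma fin_order (G : seq mx2) (g : mx2) : cplx_refl_group G -> g \in G ->
  exists n : nat, (0 < n)%N /\ g ^+ n = 1%:M.
Proof.
move=> HG Hg.
have Hu : g \is a GRing.unit by case: HG => _ _ HU _; apply: HU.
set s := [seq g ^+ i | i <- iota 0 (size G).+1].
have Hns : ~~ uniq s.
  apply/negP => Hu2.
  have := uniq_leq_size Hu2.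
  have Hsub : {subset s <= G}.
    by move=> x /mapP [i _ ->]; apply: exp_in.
  move=> /(_ G Hsub); by rewrite size_map size_iota ltnn.
case/(uniqPn 0): Hns => i [j [Hij Hj Heq]].
move: Hj; rewrite size_map size_iota => Hj.
rewrite !(nth_map 0%N) ?size_iota ?(ltn_trans Hij) // !nth_iota ?(ltn_trans Hij) // !add0n in Heq.
exists (j - i)%N; split; first by rewrite subn_gt0.
have Hui : g ^+ i \is a GRing.unit by rewrite unitrX.
apply: (mulrI Hui); rewrite mulr1 -exprD subnKC ?(ltnW Hij) //.
Qed.

Lemma inv_in (G : seq mx2) (g : mx2) : cplx_refl_group G -> g \in G -> invmx g \in G.
Proof.
move=> HG Hg; have [n [Hn Hgn]] := fin_order _ HG Hg.
have Hu : g \is a GRing.unit by case: HG => _ _ HU _; apply: HU.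
have -> : invmx g = g ^+ n.-1.
  change (g^-1 = g ^+ n.-1).
  apply: (mulrI Hu); rewrite mulrV // -exprS prednK //.
by apply: exp_in.
Qed.

Lemma codim1_refl (G : seq mx2) (g : mx2) : cplx_refl_group G -> g \in G ->
  codim g = 1%N -> is_reflection g.
Proof.
move=> HG Hg Hc; split; first exact: fin_order _ HG Hg.
move: Hc; rewrite /codim; have := rank_leq_row (kermx (g - 1%:M)).
rewrite -/(dimfix g); move: (dimfix g) => d; case: d => [|[|[|d]]] //.
Qed.

Lemma ell_spec (G : seq mx2) (g : mx2) : (exists s, refl_word G g s) ->
  (exists s, refl_word G g s /\ size s = ell G g) /\
  (forall s, refl_word G g s -> (ell G g <= size s)%N).
Proof.
move=> Hex; rewrite /ell; case: pselect => [h|hn]; last first.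
  exfalso; apply: hn; case: Hex => s Hs; exists (size s).
  by apply/asboolP; exists s.
case: ex_minnP => m /asboolP Hm Hmin; split=> // s Hs.
by apply: Hmin; apply/asboolP; exists s.
Qed.

Unset Implicit Arguments.
Theorem mainTheorem10 (G : seq mx2) :
  cplx_refl_group G ->
  forall g : mx2, g \in G ->
    (codim_atom G g <-> (is_reflection g \/ (codim g < ell G g)%N)).
Proof.
move=> HG g Hg.
have Hword : exists s, refl_word G g s by case: HG => _ _ _ HW; apply: HW.
have [[s0 [Hs0 Hsz0]] Hmin] := ell_spec Hword.
split.
- case=> _ Hne _ Hat.
  have := codim_le2 g; case Hc: (codim g) => [|[|[|]]] // _.
  + by exfalso; apply: Hne; apply: codim0.
  + by left; exact: (codim1_refl _ HG Hg Hc).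
  + right; rewrite ltnNge; apply/negP => Hle.
    case: s0 Hs0 Hsz0 Hle => [|r1 [|r2 [|r3 s]]] [Hin Hp] Hsz Hle2 /=; last by move: Hle2; rewrite -Hsz.
    * by apply: Hne; rewrite -Hp.
    * have [_ Hr] := Hin r1 (mem_head _ _).
      by move: Hc; rewrite -Hp /= mulmx1 (refl_codim Hr).
    *
      have [Hr1G Hr1] := Hin r1 (mem_head _ _).
      have Hr2in : r2 \in [:: r1; r2] by rewrite !inE eqxx orbT.
      have [Hr2G Hr2] := Hin r2 Hr2in.
      have Hu1 : r1 \is a GRing.unit by case: HG => _ _ HU _; apply: HU.
      have Hle : codim_le r1 g.
        rewrite /codim_le Hc -Hp /= mulmx1 mulmxA mulVmx // mul1mx.
        by rewrite (refl_codim Hr1) (refl_codim Hr2).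
      have Hc1 : codim_le 1%:M r1 by rewrite /codim_le codim1 invmx1 mul1mx.
      case: (Hat r1 Hr1G Hc1 Hle) => Heq.
      -- by move: (refl_codim Hr1); rewrite Heq codim1.
      -- by move: Hc; rewrite -Heq (refl_codim Hr1).
- move=> H.
  have Hne : g <> 1%:M.
    move=> Hg1; case: H.
    + by move/refl_codim; rewrite Hg1 codim1.
    + have : (ell G g <= size ([::] : seq mx2))%N.
        by apply: Hmin; split=> // r; rewrite in_nil.
      by rewrite Hg1 codim1 /= leqn0 => /eqP ->.
  split=> //; first by rewrite /codim_le codim1 invmx1 mul1mx.
  move=> b Hb _ Hle.
  have HbG' := inv_in _ HG Hb.
  have HbgG : invmx b *m g \in G by case: HG => _ HM _ _; apply: HM.
  have Hub : b \in unitmx by case: HG => _ _ HU _; apply: HU.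
  have HcG := codim_le2 g.
  move: Hle; rewrite /codim_le.
  case Hcb: (codim b) => [|[|]].
  + by left; apply: codim0.
  + case Hcr: (codim (invmx b *m g)) => [|[|]] //=.
    * move=> _; right; have := @codim0 _ Hcr => Hbg.
      by rewrite -[g]mul1mx -(mulmxV Hub) -mulmxA Hbg mulmx1.
    * move=> Hc2; exfalso; case: H => [/refl_codim|].
      -- by rewrite -Hc2.
      -- rewrite -Hc2 ltnNge => /negP; apply.
         apply: (Hmin [:: b; invmx b *m g]); split.
         ++ move=> r; rewrite !inE => /orP [/eqP ->|/eqP ->].
            ** by split=> //; exact: (@codim1_refl G b HG Hb Hcb).
            ** by split=> //; exact: (@codim1_refl G (invmx b *m g) HG HbgG Hcr).
         ++ by rewrite /= mulmx1 mulmxA mulmxV // mul1mx.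
    * by move=> Hc; move: HcG; rewrite -Hc.
  + move=> Hn; right.
    have Hr : codim (invmx b *m g) = 0%N.
      move: Hn HcG; move: (codim (invmx b *m g)) => c; case: c => // c.
      by move=> <-; rewrite !addSn addnS.
    have Hbg := @codim0 _ Hr.
    by rewrite -[g]mul1mx -(mulmxV Hub) -mulmxA Hbg mulmx1.
Qed.
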